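(* Let $P,Q$ be persistence diagrams satisfying the standing assumptions, and let $d_T^{per}(P,Q)$ be defined from a shifted quadtree as in the context (for any fixed shift). Then there is an absolute constant $C$ such that $d_W(P,Q)\le C\cdot d_T^{per}(P,Q)$.
   Context: A persistence diagram is a finite multiset of points in $\mathbb{R}^2$. Let $L=\{(x,x)\mid x\in\mathbb{R}\}$ be the diagonal and $\pi(p)=\big(\tfrac{p.x+p.y}{2},\tfrac{p.x+p.y}{2}\big)$. An augmented matching for finite multisets $A,B\subset\mathbb{R}^2$ is a subset $\Gamma\subset (A\cup\pi(B))\times(B\cup\pi(A))$ such that each element of $A$ and of $B$ (with multiplicity) appears in exactly one pair, and each pair $(a,b)$ is of the form (1) $a\in A,b\in B$, (2) $a\in A,b=\pi(a)$, or (3) $a=\pi(b),b\in B$. $d_W(P,Q)=\min_\Gamma\sum_{(p,q)\in\Gamma}\|p-q\|_2$ over augmented matchings for $P,Q$. Standing assumptions: with $X=P\uplus Q$, the minimum distance between distinct points of $X$ is $1$, the minimum distance from any point of $X$ to $L$ is $1$, $X\subseteq[0,\Delta]^2$ with $\Delta$ a power of $2$. Quadtree: $H$ is $[-\Delta,\Delta]^2$ translated by a vector with coordinates in $[0,\Delta]$ (chosen uniformly at random). For $i=-1,0,\dots,\log_2\Delta$, $G_i$ is the grid of cells of side $2^i$ obtained by repeatedly halving $H$ in each coordinate. A cell is terminal if it intersects $L$. With $P(c),Q(c)$ the number of points of $P$, $Q$ in cell $c$, $$d_T^{per}(P,Q)=\sum_{i=-1}^{\log_2\Delta}2^i\sum_{c\in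 G_i,\ c\text{ non-terminal}}|P(c)-Q(c)|.$$ *)

(* Defs.v *)
From HB Require Import structures.
From mathcomp Require Import all_boot all_order all_algebra.
From mathcomp Require Import boolp reals.
Set Implicit Arguments. Unset Strict Implicit. Unset Printing Implicit Defensive.
Import Order.TTheory GRing.Theory Num.Theory.
Local Open Scope ring_scope.

Section PersistenceDefs.
Variable R : realType.

Definition pt := (R * R)%type.

Definition dist (p q : pt) : R :=
  Num.sqrt ((p.1 - q.1) ^+ 2 + (p.2 - q.2) ^+ 2).

Definition proj (p : pt) : pt := ((p.1 + p.2) / 2, (p.1 + p.2) / 2).

Definition pnth (s : seq pt) (i : nat) : pt := nth (0, 0) s i.

(* An augmented matching between the multisets (lists) P and Q is encoded by
   f : index of P -> option (index of Q), injective on its Some-values: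
   f i = Some j  <-> pair (P_i, Q_j)          (type (1))
   f i = None    <-> pair (P_i, pi(P_i))      (type (2))
   j not in the range of f <-> pair (pi(Q_j), Q_j)  (type (3)). *)
Definition is_aug_matching (P Q : seq pt)
    (f : {ffun 'I_(size P) -> option 'I_(size Q)}) : bool :=
  [forall i, forall i', ((f i != None) && (f i == f i')) ==> (i == i')].

Definition matching_cost (P Q : seq pt)
    (f : {ffun 'I_(size P) -> option 'I_(size Q)}) : R :=
  \sum_(i < size P)
     (match f i with
      | Some j => dist (pnth P i) (pnth Q j)
      | None => dist (pnth P i) (proj (pnth P i))
      end)
  + \sum_(j < size Q | ~~ [exists i, f i == Some j])
       dist (proj (pnth Q j)) (pnth Q j).

Definition empty_matching (P Q : seq pt) : {ffun 'I_(size P) -> option 'I_(size Q)} :=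
  [ffun => None].

(* d_W(P,Q) = minimum cost over all augmented matchings (the empty matching,
   which is always an augmented matching, is used as the seed of the min). *)
Definition dW (P Q : seq pt) : R :=
  \big[Num.min/matching_cost (empty_matching P Q)]_(f : {ffun 'I_(size P) -> option 'I_(size Q)} | is_aug_matching f)
     matching_cost f.

(* Delta = 2^k ;  H = [v.1 - Delta, v.1 + Delta] x [v.2 - Delta, v.2 + Delta].
   Levels i = -1, ..., k are indexed by j = i + 1 in 0 .. k+1.             *)
Definition Delta (k : nat) : R := 2 ^+ k.

(* side length 2^i = 2^j / 2 of a level-j cell *)
Definition side (j : nat) : R := 2 ^+ j / 2.

(* number of cells per axis at level j: 2 Delta / 2^i = 2^(k+2-j) *)
Definition ncells (k j : nat) : nat := 2 ^ (k.+2 - j).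

(* the a-th slot of the subdivision of [lo, lo + N s] into N intervals of
   length s; slots are half-open [lo + a s, lo + (a+1) s) except the last one,
   which is closed, so the slots partition [lo, lo + N s]. *)
Definition in_slot (lo s : R) (N a : nat) (x : R) : bool :=
  ((lo + a%:R * s <= x) && (x < lo + a.+1%:R * s))
  || ((a == N.-1)%N && (x == lo + N%:R * s)).

Definition in_cell (k : nat) (v : pt) (j a b : nat) (p : pt) : bool :=
  in_slot (v.1 - Delta k) (side j) (ncells k j) a p.1
  && in_slot (v.2 - Delta k) (side j) (ncells k j) b p.2.

Definition terminal (k : nat) (v : pt) (j a b : nat) : bool :=
  `[< exists t : R,
        [/\ v.1 - Delta k + a%:R * side j <= t,
            t <= v.1 - Delta k + a.+1%:R * side j,
            v.2 - Delta k + b%:R * side j <= t &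
            t <= v.2 - Delta k + b.+1%:R * side j] >].

Definition dTper (k : nat) (v : pt) (P Q : seq pt) : R :=
  \sum_(j < k.+2) side j *
    \sum_(a < ncells k j) \sum_(b < ncells k j | ~~ terminal k v j a b)
       `| (count (in_cell k v j a b) P)%:R - (count (in_cell k v j a b) Q)%:R |.

End PersistenceDefs.

(* Main.v *)
Require Import Defs.
From HB Require Import structures.
From mathcomp Require Import all_boot all_order all_algebra.
From mathcomp Require Import boolp reals.
From mathcomp Require Import ring lra zify.
Set Implicit Arguments. Unset Strict Implicit. Unset Printing Implicit Defensive.
Import Order.TTheory GRing.Theory Num.Theory.
Local Open Scope ring_scope.

Section Match.
Variable R : realType.
Local Notation pt := (pt R).
Local Notation dist := (@dist R).
Local Notation proj := (@proj R).

Definition augg n m (f : {ffun 'I_n -> option 'I_m}) : bool :=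
  [forall i, forall i', ((f i != None) && (f i == f i')) ==> (i == i')].

Definition costg n m (p q : nat -> pt) (f : {ffun 'I_n -> option 'I_m}) : R :=
  \sum_(i < n)
     (match f i with
      | Some j => dist (p i) (q j)
      | None => dist (p i) (proj (p i))
      end)
  + \sum_(j < m | ~~ [exists i, f i == Some j])
       dist (proj (q j)) (q j).

Definition Exg n m p q c := exists f : {ffun 'I_n -> option 'I_m}, augg f /\ costg p q f <= c.

Definition Ex (P Q : seq pt) c := Exg (size P) (size Q) (pnth P) (pnth Q) c.

Lemma Ex_dW P Q c : Ex P Q c -> dW P Q <= c.
Proof.
case=> f [af cf]; rewrite /dW (bigD1 f) //=.
by rewrite ge_min cf.
Qed.

Lemma Exg_mono n m p q c c' : c <= c' -> Exg n m p q c -> Exg n m p q c'.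
Proof. by move=> le [f [af cf]]; exists f; split => //; apply: le_trans le. Qed.

Lemma Exg_nil p q : Exg 0 0 p q 0.
Proof.
exists [ffun i => None]; split.
  by apply/forallP => -[].
by rewrite /costg !big_ord0 addr0.
Qed.

Lemma Exg_insL n m (p p' q : nat -> pt) c (i0 : 'I_n.+1) :
  (forall i : 'I_n, p' (lift i0 i) = p i) -> Exg n m p q c ->
  Exg n.+1 m p' q (c + dist (p' i0) (proj (p' i0))).
Proof.
move=> hp [f [af cf]].
exists [ffun i => if unlift i0 i is Some i' then f i' else None]; split.
  apply/forallP => i; apply/forallP => i'; rewrite !ffunE.
  case: unliftP => [a ->|->]; last by rewrite eqxx.
  case: unliftP => [b ->|->]; last by case: (f a).
  apply/implyP => /andP[h1 h2]; move/forallP: af => /(_ a) /forallP /(_ b).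
  by rewrite h1 h2 /= => /eqP ->.
rewrite /costg (bigD1_ord i0) //= ffunE unlift_none /=.
have -> : \sum_(i < n) match [ffun i => if unlift i0 i is Some i' then f i' else None] (lift i0 i) with
     | Some j => dist (p' (lift i0 i)) (q j) | None => dist (p' (lift i0 i)) (proj (p' (lift i0 i))) end
   = \sum_(i < n) match f i with
     | Some j => dist (p i) (q j) | None => dist (p i) (proj (p i)) end.
  by apply: eq_bigr => i _; rewrite ffunE liftK hp.
have -> : \sum_(j < m | ~~ [exists i, [ffun i => if unlift i0 i is Some i'
     then f i' else None] i == Some j]) dist (proj (q j)) (q j)
   = \sum_(j < m | ~~ [exists i, f i == Some j]) dist (proj (q j)) (q j).
  apply: eq_bigl => j; congr (~~ _); apply/existsP/existsP => -[i].
    rewrite ffunE; case: (unlift i0 i) => [a|] // h; by exists a.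
  by move=> h; exists (lift i0 i); rewrite ffunE liftK.
rewrite /costg in cf; lra.
Qed.

Lemma Exg_insR n m (p q q' : nat -> pt) c (j0 : 'I_m.+1) :
  (forall j : 'I_m, q' (lift j0 j) = q j) -> Exg n m p q c ->
  Exg n m.+1 p q' (c + dist (proj (q' j0)) (q' j0)).
Proof.
move=> hq [f [af cf]].
exists [ffun i => omap (lift j0) (f i)]; split.
  apply/forallP => i; apply/forallP => i'; rewrite !ffunE.
  move/forallP: af => /(_ i) /forallP /(_ i').
  case: (f i) => [a|] //=; case: (f i') => [b|] //= h.
  have E : forall a b : 'I_m, (Some (lift j0 a) == Some (lift j0 b)) = (Some a == Some b).
    by move=> a' b'; apply/eqP/eqP => [/Some_inj/lift_inj ->|[->]].
  by rewrite E.
rewrite /costg (bigD1_ord j0) /=; last first.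
  by apply/negP => /existsP [i]; rewrite ffunE; case: (f i) => //= a /eqP [] /eqP; rewrite eq_sym (negbTE (neq_lift _ _)).
have -> : \sum_(i < n) match [ffun i => omap (lift j0) (f i)] i with
     | Some j => dist (p i) (q' j) | None => dist (p i) (proj (p i)) end
   = \sum_(i < n) match f i with
     | Some j => dist (p i) (q j) | None => dist (p i) (proj (p i)) end.
  by apply: eq_bigr => i _; rewrite ffunE; case: (f i) => //= a; rewrite hq.
have -> : \sum_(j < m | ~~ [exists i, [ffun i => omap (lift j0) (f i)] i == Some (lift j0 j)])
       dist (proj (q' (lift j0 j))) (q' (lift j0 j))
   = \sum_(j < m | ~~ [exists i, f i == Some j]) dist (proj (q j)) (q j).
  apply: eq_big => [j|j _]; last by rewrite hq.
  congr (~~ _); apply/existsP/existsP => -[i]; exists i; move: p0; rewrite ffunE.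
    by case: (f i) => //= a /eqP /Some_inj/lift_inj ->.
  by move/eqP => ->.
rewrite /costg in cf; lra.
Qed.

Lemma big_lift_notP m (j0 : 'I_m.+1) (P : pred 'I_m.+1) (F : 'I_m.+1 -> R) :
  ~~ P j0 -> \sum_(j | P j) F j = \sum_(j < m | P (lift j0 j)) F (lift j0 j).
Proof.
move=> h; rewrite big_mkcond (bigD1_ord j0) //= (negbTE h) add0r.
by rewrite [RHS]big_mkcond.
Qed.

Lemma Exg_insLR n m (p p' q q' : nat -> pt) c (i0 : 'I_n.+1) (j0 : 'I_m.+1) :
  (forall i : 'I_n, p' (lift i0 i) = p i) ->
  (forall j : 'I_m, q' (lift j0 j) = q j) -> Exg n m p q c ->
  Exg n.+1 m.+1 p' q' (c + dist (p' i0) (q' j0)).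
Proof.
move=> hp hq [f [af cf]].
have E : forall a b : 'I_m, (Some (lift j0 a) == Some (lift j0 b)) = (Some a == Some b).
  by move=> a' b'; apply/eqP/eqP => [/Some_inj/lift_inj ->|[->]].
have N0 : forall a : 'I_m, (Some (lift j0 a) == Some j0) = false.
  by move=> a; apply/eqP => /Some_inj /eqP; rewrite eq_sym (negbTE (neq_lift _ _)).
exists [ffun i => if unlift i0 i is Some i' then omap (lift j0) (f i') else Some j0]; split.
  apply/forallP => i; apply/forallP => i'; rewrite !ffunE.
  case: unliftP => [a ->|->]; case: unliftP => [b ->|->] /=.
  - move/forallP: af => /(_ a) /forallP /(_ b).
    case: (f a) => [a1|] //=; case: (f b) => [b1|] //= h.
    by rewrite E (inj_eq lift_inj).
  - by case: (f a) => [a1|] //=; rewrite N0.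
  - by case: (f b) => [b1|] //=; rewrite eq_sym N0.
  - by apply/implyP => _.
rewrite /costg (bigD1_ord i0) //= ffunE unlift_none /=.
rewrite (@big_lift_notP _ j0) /=; last first.
  apply/negPn; apply/existsP; exists i0; by rewrite ffunE unlift_none.
have -> : \sum_(i < n) match [ffun i => if unlift i0 i is Some i' then omap (lift j0) (f i') else Some j0] (lift i0 i) with
     | Some j => dist (p' (lift i0 i)) (q' j) | None => dist (p' (lift i0 i)) (proj (p' (lift i0 i))) end
   = \sum_(i < n) match f i with
     | Some j => dist (p i) (q j) | None => dist (p i) (proj (p i)) end.
  by apply: eq_bigr => i _; rewrite ffunE liftK hp; case: (f i) => //= a; rewrite hq.
have -> : \sum_(j < m | ~~ [exists i, [ffun i => if unlift i0 i is Some i' then omap (lift j0) (f i') else Some j0] i == Some (lift j0 j)])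
       dist (proj (q' (lift j0 j))) (q' (lift j0 j))
   = \sum_(j < m | ~~ [exists i, f i == Some j]) dist (proj (q j)) (q j).
  apply: eq_big => [j|j _]; last by rewrite hq.
  congr (~~ _); apply/existsP/existsP => -[i].
    rewrite ffunE; case: (unlift i0 i) => [a|] /=.
      by case fa: (f a) => [b|] //=; rewrite E => h; exists a; rewrite fa.
    by rewrite eq_sym N0.
  by move=> h; exists (lift i0 i); rewrite ffunE liftK; move/eqP: h => ->.
rewrite /costg in cf; lra.
Qed.

Lemma pnth_ins (P1 P2 : seq pt) x n (i0 : 'I_n.+1) :
  val i0 = size P1 -> forall i : 'I_n, pnth (P1 ++ x :: P2) (lift i0 i) = pnth (P1 ++ P2) i.
Proof.
move=> e i; rewrite /pnth /= /bump e !nth_cat.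
case: (ltnP i (size P1)) => h.
  by rewrite add0n h.
rewrite add1n ltnNge (leqW h) /= subSn //.
Qed.

Lemma pnth_at (P1 P2 : seq pt) x : pnth (P1 ++ x :: P2) (size P1) = x.
Proof. by rewrite /pnth nth_cat ltnn subnn. Qed.

Lemma size_ins (P1 P2 : seq pt) x : size (P1 ++ x :: P2) = (size (P1 ++ P2)).+1.
Proof. by rewrite !size_cat /= addnS. Qed.

Lemma Ex_insL P1 P2 x Q c : Ex (P1 ++ P2) Q c -> Ex (P1 ++ x :: P2) Q (c + dist x (proj x)).
Proof.
rewrite /Ex size_ins => h.
have lt : (size P1 < (size (P1 ++ P2)).+1)%N by rewrite size_cat ltnS leq_addr.
have := Exg_insL (p' := pnth (P1 ++ x :: P2)) (@pnth_ins P1 P2 x _ (Ordinal lt) erefl) h.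
by rewrite /= pnth_at.
Qed.

Lemma Ex_insR P Q1 Q2 y c : Ex P (Q1 ++ Q2) c -> Ex P (Q1 ++ y :: Q2) (c + dist (proj y) y).
Proof.
rewrite /Ex size_ins => h.
have lt : (size Q1 < (size (Q1 ++ Q2)).+1)%N by rewrite size_cat ltnS leq_addr.
have := Exg_insR (q' := pnth (Q1 ++ y :: Q2)) (@pnth_ins Q1 Q2 y _ (Ordinal lt) erefl) h.
by rewrite /= pnth_at.
Qed.

Lemma Ex_insLR P1 P2 x Q1 Q2 y c : Ex (P1 ++ P2) (Q1 ++ Q2) c ->
  Ex (P1 ++ x :: P2) (Q1 ++ y :: Q2) (c + dist x y).
Proof.
rewrite /Ex !size_ins => h.
have lt : (size P1 < (size (P1 ++ P2)).+1)%N by rewrite size_cat ltnS leq_addr.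
have lt' : (size Q1 < (size (Q1 ++ Q2)).+1)%N by rewrite size_cat ltnS leq_addr.
have := Exg_insLR (p' := pnth (P1 ++ x :: P2)) (q' := pnth (Q1 ++ y :: Q2))
   (@pnth_ins P1 P2 x _ (Ordinal lt) erefl) (@pnth_ins Q1 Q2 y _ (Ordinal lt') erefl) h.
by rewrite /= !pnth_at.
Qed.

Inductive Plan : seq pt -> seq pt -> R -> Prop :=
| PNil : Plan [::] [::] 0
| PL p P Q c : Plan P Q c -> Plan (p :: P) Q (c + dist p (proj p))
| PR q P Q c : Plan P Q c -> Plan P (q :: Q) (c + dist (proj q) q)
| PLR p q P Q c : Plan P Q c -> Plan (p :: P) (q :: Q) (c + dist p q)
| PPerm P Q P' Q' c : perm_eq P P' -> perm_eq Q Q' -> Plan P Q c -> Plan P' Q' c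
| PMono P Q c c' : c <= c' -> Plan P Q c -> Plan P Q c'.

Lemma perm_ins (p : pt) P P1 P2 : perm_eq (p :: P) (P1 ++ p :: P2) -> perm_eq P (P1 ++ P2).
Proof.
move/permP => h; apply/permP => a; move: (h a); rewrite /= !count_cat /=; lia.
Qed.

Lemma plan_Ex P Q c : Plan P Q c -> forall P' Q', perm_eq P P' -> perm_eq Q Q' -> Ex P' Q' c.
Proof.
elim=> {P Q c}.
- move=> P' Q' h1 h2.
  move: (perm_size h1) (perm_size h2) => /= /esym/size0nil -> /esym/size0nil ->.
  exact: Exg_nil.
- move=> p P Q c _ IH P' Q' h1 h2.
  have hp : p \in P' by rewrite -(perm_mem h1) mem_head.
  case/splitPr: hp h1 => P1 P2 h1; apply: Ex_insL; apply: IH h2.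
  exact: perm_ins h1.
- move=> q P Q c _ IH P' Q' h1 h2.
  have hq : q \in Q' by rewrite -(perm_mem h2) mem_head.
  case/splitPr: hq h2 => Q1 Q2 h2; apply: Ex_insR; apply: IH h1 _.
  exact: perm_ins h2.
- move=> p q P Q c _ IH P' Q' h1 h2.
  have hp : p \in P' by rewrite -(perm_mem h1) mem_head.
  have hq : q \in Q' by rewrite -(perm_mem h2) mem_head.
  case/splitPr: hq h2 => Q1 Q2 h2.
  case/splitPr: hp h1 => P1 P2 h1.
  apply: Ex_insLR; apply: IH; [exact: perm_ins h1 | exact: perm_ins h2].
- move=> P Q P' Q' c h1 h2 _ IH P'' Q'' h3 h4.
  apply: IH; [exact: perm_trans h1 h3 | exact: perm_trans h2 h4].
- move=> P Q c c' le _ IH P' Q' h1 h2.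
  exact: Exg_mono le (IH _ _ h1 h2).
Qed.

Lemma plan_dW P Q c : Plan P Q c -> dW P Q <= c.
Proof. by move=> h; apply: Ex_dW; apply: plan_Ex h _ _ (perm_refl _) (perm_refl _). Qed.

Lemma plan_eq P Q c c' : c = c' -> Plan P Q c -> Plan P Q c'.
Proof. by move=> ->. Qed.

Lemma plan_cat P1 Q1 c1 P2 Q2 c2 : Plan P1 Q1 c1 -> Plan P2 Q2 c2 ->
  Plan (P1 ++ P2) (Q1 ++ Q2) (c1 + c2).
Proof.
move=> h; elim: h => {P1 Q1 c1}.
- by move=> h2; apply: plan_eq h2; rewrite add0r.
- by move=> p P Q c _ IH h2; apply: plan_eq (PL p (IH h2)); rewrite addrAC.
- by move=> q P Q c _ IH h2; apply: plan_eq (PR q (IH h2)); rewrite addrAC.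
- by move=> p q P Q c _ IH h2; apply: plan_eq (PLR p q (IH h2)); rewrite addrAC.
- move=> P Q P' Q' c h1 h2' _ IH h2.
  by apply: PPerm (IH h2); rewrite perm_cat2r.
- move=> P Q c c' le _ IH h2; apply: PMono (IH h2); lra.
Qed.

End Match.
Section Slot.
Variable R : realType.

Definition slotn (lo s : R) (N : nat) (x : R) : nat := minn (Num.truncn ((x - lo) / s)) N.-1.

Lemma slot_spec lo s N a x : 0 < s -> (0 < N)%N -> lo <= x -> x <= lo + N%:R * s ->
  (a < N)%N -> in_slot lo s N a x = (a == slotn lo s N x).
Proof.
move=> s0 N0 h1 h2 aN.
set y := (x - lo) / s.
have y0 : 0 <= y by rewrite /y divr_ge0 // ?subr_ge0 // ltW.
have E1 : forall r : R, (lo + r * s <= x) = (r <= y).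
  by move=> r; rewrite /y ler_pdivlMr //; apply/idP/idP => ?; lra.
have E2 : forall r : R, (x < lo + r * s) = (y < r).
  by move=> r; rewrite /y ltr_pdivrMr //; apply/idP/idP => ?; lra.
have yN : y <= N%:R by rewrite /y ler_pdivrMr //; lra.
have sn0 : s != 0 by rewrite gt_eqF.
have E3 : (x == lo + N%:R * s) = (y == N%:R).
  apply/eqP/eqP => e.
    by rewrite /y e; field.
  move: e; rewrite /y => /(congr1 (fun t => t * s)); rewrite mulfVK //; lra.
rewrite /in_slot E1 E2 E3 /slotn -/y.
have [tN|tN] := ltnP (Num.truncn y) N.
  have -> : minn (Num.truncn y) N.-1 = Num.truncn y by apply/minn_idPl; lia.
  have : y < N%:R by rewrite -truncn_lt_nat.
  move=> yl; rewrite (_ : (y == N%:R) = false); last by apply/negbTE; rewrite lt_eqF.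
  by rewrite andbF orbF -truncn_eq // eq_sym.
have yE : y = N%:R by apply/eqP; rewrite eq_le yN /= -truncn_ge_nat.
have -> : minn (Num.truncn y) N.-1 = N.-1 by apply/minn_idPr; lia.
rewrite yE eqxx andbT.
have -> : (a%:R <= (N%:R : R)) && ((N%:R : R) < a.+1%:R) = false.
  by rewrite ltr_nat ltnS leqNgt aN andbF.
by [].
Qed.

Lemma slot_lt (lo s : R) N (x : R) : (0 < N)%N -> (slotn lo s N x < N)%N.
Proof. by move=> N0; rewrite /slotn; lia. Qed.

Lemma in_slot_closed (lo s : R) N a (x : R) : 0 <= s -> (a < N)%N -> in_slot lo s N a x ->
  lo + a%:R * s <= x /\ x <= lo + a.+1%:R * s.
Proof.
move=> s0 aN /orP[/andP[h1 h2]|/andP[/eqP ea /eqP ex]]; first by split => //; apply: ltW.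
have -> : a.+1 = N by lia.
split; last by rewrite ex.
rewrite ex lerD2l ler_wpM2r // ler_nat; lia.
Qed.

Lemma in_slot_half (lo s : R) N a (x : R) : 0 <= s -> in_slot lo s (N.*2) a x ->
  in_slot lo (s * 2) N (a./2) x.
Proof.
have H2 : forall m, m%:R * (s * 2) = (m * 2)%:R * s by move=> m; rewrite natrM; ring.
move=> s0 /orP[/andP[h1 h2]|/andP[/eqP ea /eqP ex]].
  apply/orP; left; apply/andP; split.
    apply: le_trans h1; rewrite lerD2l H2 ler_wpM2r // ler_nat.
    rewrite -divn2; lia.
  apply: (lt_le_trans h2); rewrite lerD2l H2 ler_wpM2r // ler_nat.
  rewrite -divn2; lia.
apply/orP; right; apply/andP; split.
  apply/eqP; rewrite ea -divn2; lia.
by rewrite ex H2 muln2.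
Qed.

End Slot.
Section T.
Variable R : realType.
Lemma sq_le (d s : R) : -s <= d -> d <= s -> d^+2 <= s^+2.
Proof. move=> h1 h2; nra. Qed.

Lemma dist_box (x y : pt R) (s : R) : 0 <= s ->
  -s <= x.1 - y.1 <= s -> -s <= x.2 - y.2 <= s -> dist x y <= Num.sqrt (2 * s^+2).
Proof.
move=> s0 /andP[h1 h2] /andP[h3 h4]; rewrite /dist ler_sqrt; last by nra.
have := sq_le h1 h2; have := sq_le h3 h4; lra.
Qed.

Lemma sqrt_2s (s : R) : 0 <= s -> Num.sqrt (2 * s^+2) <= 2 * s.
Proof.
move=> s0; rewrite -[X in _ <= X]ger0_norm ?mulr_ge0 // -sqrtr_sqr ler_sqrt; nra.
Qed.

Lemma sqrt_half : Num.sqrt (2 * (1/2 : R)^+2) < 1.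
Proof. rewrite -[X in _ < X]sqrtr1 ltr_sqrt //; lra. Qed.

Lemma dist_diag (x : pt R) (D : R) : 0 <= D -> -D <= x.1 - x.2 <= D -> dist x (proj x) <= D.
Proof.
move=> D0 /andP[h1 h2]; rewrite /dist /proj /=.
rewrite -[X in _ <= X]ger0_norm // -sqrtr_sqr ler_sqrt; last by nra.
have e : (x.1 - (x.1 + x.2) / 2) ^+ 2 + (x.2 - (x.1 + x.2) / 2) ^+ 2 = (x.1 - x.2)^+2 / 2 by field.
rewrite e; have := sq_le h1 h2; have : 0 <= (x.1 - x.2)^+2 by apply: sqr_ge0.
lra.
Qed.

Lemma dist_diag_t (x : pt R) (t : R) : -1/2 <= x.1 - t <= 1/2 -> -1/2 <= x.2 - t <= 1/2 -> dist x (t, t) < 1.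
Proof.
move=> h1 h2; apply: le_lt_trans sqrt_half.
apply: dist_box => //=; lra.
Qed.

Lemma dist_refl (x : pt R) : dist x x = 0.
Proof. by rewrite /dist !subrr expr0n /= addr0 sqrtr0. Qed.

Lemma dist_ge0 (x y : pt R) : 0 <= dist x y.
Proof. exact: sqrtr_ge0. Qed.
End T.

Section Geo.
Variable R : realType.
Variable k : nat.
Variable v : pt R.
Hypothesis hv : [/\ 0 <= v.1, v.1 <= Delta R k, 0 <= v.2 & v.2 <= Delta R k].

Definition inR (x : pt R) := [/\ 0 <= x.1, x.1 <= Delta R k, 0 <= x.2 & x.2 <= Delta R k].
Definition lo1 := v.1 - Delta R k.
Definition lo2 := v.2 - Delta R k.
Definition Kj (j : nat) (x : pt R) : nat * nat :=
  (slotn lo1 (side R j) (ncells k j) x.1, slotn lo2 (side R j) (ncells k j) x.2).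
Definition term j (t : nat * nat) := terminal k v j t.1 t.2.

Lemma Delta_gt0 : 0 < Delta R k.
Proof. by rewrite /Delta exprn_gt0. Qed.

Lemma side_gt0 j : 0 < side R j.
Proof. by rewrite /side divr_gt0 // exprn_gt0. Qed.

Lemma sideS j : side R j.+1 = side R j * 2.
Proof. by rewrite /side exprS; field. Qed.

Lemma ncells_gt0 j : (0 < ncells k j)%N.
Proof. by rewrite /ncells expn_gt0. Qed.

Lemma ncellsS j : (j <= k)%N -> ncells k j = (ncells k j.+1).*2.
Proof.
move=> jk; rewrite /ncells -mul2n -expnS.
by rewrite (_ : (k.+2 - j = (k.+2 - j.+1).+1)%N) //; lia.
Qed.

Lemma Ns j : (j <= k.+1)%N -> (ncells k j)%:R * side R j = 2 * Delta R k.
Proof.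
move=> jk; rewrite /ncells /side /Delta natrX.
have -> : (2%:R : R) = 2 by [].
rewrite mulrA -exprD subnK; last lia.
by rewrite !exprS; field.
Qed.

Lemma K_cell j x a b : (j <= k.+1)%N -> inR x -> (a < ncells k j)%N -> (b < ncells k j)%N ->
  in_cell k v j a b x = (Kj j x == (a, b)).
Proof.
move=> jk [h1 h2 h3 h4] aN bN; case: hv => v1 v2 v3 v4.
have D0 := Delta_gt0.
rewrite /in_cell /Kj xpair_eqE.
rewrite (slot_spec (side_gt0 j) (ncells_gt0 j)) //; last 2 first.
- rewrite /lo1; lra.
- rewrite Ns // /lo1; lra.
rewrite (slot_spec (side_gt0 j) (ncells_gt0 j)) //; last 2 first.
- rewrite /lo2; lra.
- rewrite Ns // /lo2; lra.
by rewrite /lo1 /lo2 ![_ == a]eq_sym ![_ == b]eq_sym.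
Qed.

Lemma K_lt j x : ((Kj j x).1 < ncells k j)%N /\ ((Kj j x).2 < ncells k j)%N.
Proof. by split; apply: slot_lt; apply: ncells_gt0. Qed.

Lemma K_in_cell j x : (j <= k.+1)%N -> inR x -> in_cell k v j (Kj j x).1 (Kj j x).2 x.
Proof.
move=> jk hx; have [l1 l2] := K_lt j x.
by rewrite K_cell // -surjective_pairing.
Qed.

Lemma K_par j x : (j <= k)%N -> inR x -> Kj j.+1 x = ((Kj j x).1./2, (Kj j x).2./2).
Proof.
move=> jk hx; have /andP[c1 c2] := K_in_cell (leqW jk) hx.
have [l1 l2] := K_lt j x.
rewrite (ncellsS jk) in c1 c2 l1 l2.
have s0 := ltW (side_gt0 j).
have d1 := in_slot_half s0 c1; have d2 := in_slot_half s0 c2.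
apply/eqP; rewrite -K_cell //.
- by rewrite /in_cell sideS d1 d2.
- rewrite -divn2; lia.
- rewrite -divn2; lia.
Qed.

Lemma term_par j t : term j t -> term j.+1 (t.1./2, t.2./2).
Proof.
rewrite /term /terminal => /asboolP [u [h1 h2 h3 h4]]; apply/asboolP; exists u.
have s0 := ltW (side_gt0 j).
have H2 : forall m, m%:R * side R j.+1 = (m * 2)%:R * side R j by move=> m; rewrite sideS natrM; ring.
have A : forall m, (m./2 * 2 <= m)%N by move=> m; rewrite -divn2; lia.
have B : forall m, (m.+1 <= (m./2).+1 * 2)%N by move=> m; rewrite -divn2; lia.
rewrite /= !H2; split.
- apply: le_trans h1; rewrite lerD2l ler_wpM2r // ler_nat; exact: A.
- apply: (le_trans h2); rewrite lerD2l ler_wpM2r // ler_nat; exact: B.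
- apply: le_trans h3; rewrite lerD2l ler_wpM2r // ler_nat; exact: A.
- apply: (le_trans h4); rewrite lerD2l ler_wpM2r // ler_nat; exact: B.
Qed.

Lemma K_box j x y : (j <= k.+1)%N -> inR x -> inR y -> Kj j x = Kj j y ->
  -side R j <= x.1 - y.1 <= side R j /\ -side R j <= x.2 - y.2 <= side R j.
Proof.
move=> jk hx hy e.
have /andP[c1 c2] := K_in_cell jk hx; have /andP[d1 d2] := K_in_cell jk hy.
have [l1 l2] := K_lt j x.
have s0 := ltW (side_gt0 j).
rewrite e in c1 c2 l1 l2.
have [a1 a2] := in_slot_closed s0 l1 c1; have [b1 b2] := in_slot_closed s0 l1 d1.
have [a3 a4] := in_slot_closed s0 l2 c2; have [b3 b4] := in_slot_closed s0 l2 d2.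
have E : forall m, m.+1%:R * side R j = m%:R * side R j + side R j by move=> m; rewrite -addn1 natrD; ring.
rewrite !E in a2 b2 a4 b4.
split; apply/andP; split; lra.
Qed.

Lemma K_dist j x y : (j <= k.+1)%N -> inR x -> inR y -> Kj j x = Kj j y ->
  dist x y <= 2 * side R j.
Proof.
move=> jk hx hy e; have [h1 h2] := K_box jk hx hy e.
apply: le_trans (sqrt_2s (ltW (side_gt0 j))).
exact: dist_box (ltW (side_gt0 j)) h1 h2.
Qed.

Lemma K_term j x : (j <= k.+1)%N -> inR x -> term j (Kj j x) -> dist x (proj x) <= 2 * side R j.
Proof.
move=> jk hx /asboolP [u [h1 h2 h3 h4]].
have /andP[c1 c2] := K_in_cell jk hx.
have [l1 l2] := K_lt j x.
have s0 := ltW (side_gt0 j).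
have [a1 a2] := in_slot_closed s0 l1 c1; have [a3 a4] := in_slot_closed s0 l2 c2.
have E : forall m, m.+1%:R * side R j = m%:R * side R j + side R j by move=> m; rewrite -addn1 natrD; ring.
rewrite !E in a2 a4 h2 h4.
apply: dist_diag; first by rewrite mulr_ge0.
apply/andP; split; lra.
Qed.

Lemma side0 : side R 0 = 1/2.
Proof. by rewrite /side expr0. Qed.

Lemma K0_eq x y : inR x -> inR y -> Kj 0 x = Kj 0 y -> dist x y < 1.
Proof.
move=> hx hy e; have [h1 h2] := K_box (leq0n _) hx hy e.
rewrite side0 in h1 h2.
apply: le_lt_trans (sqrt_half R).
apply: (dist_box _ h1 h2); lra.
Qed.

Lemma K0_term x : inR x -> term 0 (Kj 0 x) -> exists t : R, dist x (t, t) < 1.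
Proof.
move=> hx /asboolP [u [h1 h2 h3 h4]]; exists u.
have /andP[c1 c2] := K_in_cell (leq0n _) hx.
have [l1 l2] := K_lt 0 x.
have s0 := ltW (side_gt0 0).
have [a1 a2] := in_slot_closed s0 l1 c1; have [a3 a4] := in_slot_closed s0 l2 c2.
have E : forall m, m.+1%:R * side R 0 = m%:R * side R 0 + side R 0 by move=> m; rewrite -addn1 natrD; ring.
rewrite !E in a2 a4 h2 h4; rewrite side0 in a2 a4 h2 h4 a1 a3 h1 h3.
apply: dist_diag_t; apply/andP; split; lra.
Qed.

Lemma diag_top x : inR x -> dist x (proj x) <= side R k.+1.
Proof.
move=> [h1 h2 h3 h4]; have -> : side R k.+1 = Delta R k by rewrite /side /Delta exprS; field.
apply: dist_diag; first exact: ltW Delta_gt0.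
apply/andP; split; lra.
Qed.

End Geo.
Section Comb.
Variable T : eqType.

Lemma greedy (K : T -> nat * nat) (RP RQ : seq T) : exists RP' RQ' (L : seq (T * T)),
  [/\ perm_eq RP (RP' ++ map fst L), perm_eq RQ (RQ' ++ map snd L),
      all (fun pr => K pr.1 == K pr.2) L &
      forall x y, x \in RP' -> y \in RQ' -> K x != K y].
Proof.
elim: RP RQ => [|x RP IH] RQ.
  exists [::], RQ, [::]; split => //; by rewrite cats0.
have [RP' [RQ' [L [h1 h2 h3 h4]]]] := IH RQ.
case hh: (has (fun y => K y == K x) RQ').
  have [y yin /eqP ey] := hasP hh.
  exists RP', (rem y RQ'), ((x, y) :: L); split => /=.
  - by apply/permP => a; move/permP: h1 => /(_ a); rewrite /= !count_cat /=; lia.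
  - apply/permP => a; move/permP: h2 => /(_ a); move/permP: (perm_to_rem yin) => /(_ a).
    rewrite /= !count_cat /=; lia.
  - by rewrite ey eqxx h3.
  - by move=> x' y' hx /mem_rem hy; apply: h4.
exists (x :: RP'), RQ', L; split => //.
- by apply/permP => a; move/permP: h1 => /(_ a); rewrite /= !count_cat /=; lia.
- move=> x' y'; rewrite inE => /orP[/eqP -> | hx] hy; last exact: h4.
  apply/negP => /eqP e; move/negP: hh; apply; apply/hasP; exists y' => //; by rewrite e.
Qed.

Lemma bal_pairs (K : T -> nat * nat) (L : seq (T * T)) (S : pred (nat * nat)) :
  all (fun pr => K pr.1 == K pr.2) L ->
  count (fun x => S (K x)) (map fst L) = count (fun x => S (K x)) (map snd L).
Proof.
elim: L => [|[x y] L IH] //= /andP[/eqP e h]; by rewrite e IH.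
Qed.

Lemma sum_count1 N (F : nat -> T -> bool) (g : T -> nat) (s : seq T) :
  (forall x, (g x < N)%N) ->
  (\sum_(a < N) count (fun x => (g x == a) && F a x) s = count (fun x => F (g x) x) s)%N.
Proof.
move=> hg; elim: s => [|x s IH]; first by rewrite big1.
rewrite /= big_split /= IH; congr (_ + _)%N.
rewrite (bigD1 (Ordinal (hg x))) //= eqxx big1 ?addn0 // => a ne.
have -> : (g x == a) = false.
  by apply/negbTE; apply: contra ne => /eqP e; apply/eqP; apply: val_inj.
by [].
Qed.

Lemma sum_count_pairs N (S : nat -> nat -> bool) (g : T -> nat * nat) (s : seq T) :
  (forall x, ((g x).1 < N)%N /\ ((g x).2 < N)%N) ->
  (\sum_(a < N) \sum_(b < N | S a b) count (fun x => g x == (nat_of_ord a, nat_of_ord b)) s =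
   count (fun x => S (g x).1 (g x).2) s)%N.
Proof.
move=> hg.
have e1 : forall a : 'I_N, (\sum_(b < N | S a b) count (fun x => g x == (nat_of_ord a, nat_of_ord b)) s
   = \sum_(b < N) count (fun x => ((g x).2 == b) && (((g x).1 == a) && S a b)) s)%N.
  move=> a; rewrite big_mkcond; apply: eq_bigr => b _.
  case: (S a b); last by rewrite (@eq_count _ _ pred0) ?count_pred0 // => x; rewrite !andbF.
  apply: eq_count => x; rewrite andbT [g x]surjective_pairing xpair_eqE andbC //.
have e2 : forall a : 'I_N, (\sum_(b < N) count (fun x => ((g x).2 == b) && (((g x).1 == a) && S a b)) s
   = count (fun x => ((g x).1 == a) && S a (g x).2) s)%N.
  move=> a; rewrite (sum_count1 (fun b x => ((g x).1 == a) && S a b) (g := fun x => (g x).2)) //.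
  by move=> x; case: (hg x).
rewrite (eq_bigr _ (fun a _ => e1 a)) (eq_bigr _ (fun a _ => e2 a)).
by rewrite (sum_count1 (fun a x => S a (g x).2) (g := fun x => (g x).1)) // => x; case: (hg x).
Qed.
End Comb.
Section Main.
Variable R : realType.
Local Notation pt := (pt R).

Lemma plan_pairs (L : seq (pt * pt)) (D : R) :
  (forall pr, pr \in L -> dist pr.1 pr.2 <= D) ->
  Plan (map fst L) (map snd L) ((size L)%:R * D).
Proof.
elim: L => [|[x y] L IH] h /=; first by apply: (plan_eq _ (PNil R)); rewrite mul0r.
apply: PMono (PLR x y (IH _)).
  have := h (x, y) (mem_head _ _); rewrite /= -addn1 natrD; lra.
by move=> pr hpr; apply: h; rewrite inE hpr orbT.
Qed.

Lemma plan_diagL (Ts : seq pt) (D : R) :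
  (forall x, x \in Ts -> dist x (proj x) <= D) -> Plan Ts [::] ((size Ts)%:R * D).
Proof.
elim: Ts => [|x Ts IH] h /=; first by apply: (plan_eq _ (PNil R)); rewrite mul0r.
apply: PMono (PL x (IH _)).
  have := h x (mem_head _ _); rewrite /= -addn1 natrD; lra.
by move=> y hy; apply: h; rewrite inE hy orbT.
Qed.

Lemma plan_diagR (Ts : seq pt) (D : R) :
  (forall x, x \in Ts -> dist (proj x) x <= D) -> Plan [::] Ts ((size Ts)%:R * D).
Proof.
elim: Ts => [|x Ts IH] h /=; first by apply: (plan_eq _ (PNil R)); rewrite mul0r.
apply: PMono (PR x (IH _)).
  have := h x (mem_head _ _); rewrite /= -addn1 natrD; lra.
by move=> y hy; apply: h; rewrite inE hy orbT.
Qed.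

Lemma dist_sym (x y : pt) : dist x y = dist y x.
Proof. by rewrite /dist; congr Num.sqrt; ring. Qed.

Variable k : nat.
Variable v : pt.
Variables P Q : seq pt.
Hypothesis hv : [/\ 0 <= v.1, v.1 <= Delta R k, 0 <= v.2 & v.2 <= Delta R k].
Hypothesis hreg : forall p, p \in P ++ Q -> inR k p.
Hypothesis hmin : forall p q, p \in P ++ Q -> q \in P ++ Q -> p != q -> 1 <= dist p q.
Hypothesis hdiag : forall p (t : R), p \in P ++ Q -> 1 <= dist p (t, t).

Definition Tj j : R := \sum_(a < ncells k j) \sum_(b < ncells k j | ~~ terminal k v j a b)
       `| (count (in_cell k v j a b) P)%:R - (count (in_cell k v j a b) Q)%:R |.

Lemma dTperE : dTper k v P Q = \sum_(j < k.+2) side R j * Tj j.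
Proof. by []. Qed.

Definition bal j (MP MQ : seq pt) := forall S : pred (nat * nat),
  (forall t, S t -> ~~ term k v j t) ->
  count (fun x => S (Kj k v j x)) MP = count (fun x => S (Kj k v j x)) MQ.

Definition resid j (RP RQ : seq pt) :=
  (forall x, x \in RP ++ RQ -> ~~ term k v j (Kj k v j x)) /\
  (forall x y, x \in RP -> y \in RQ -> Kj k v j x != Kj k v j y).

Lemma memP_l (A B : seq pt) x : perm_eq P (A ++ B) -> x \in A -> inR k x.
Proof. by move=> h hx; apply: hreg; rewrite mem_cat (perm_mem h) mem_cat hx. Qed.
Lemma memP_r (A B : seq pt) x : perm_eq P (A ++ B) -> x \in B -> inR k x.
Proof. by move=> h hx; apply: hreg; rewrite mem_cat (perm_mem h) mem_cat hx orbT. Qed.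
Lemma memQ_l (A B : seq pt) x : perm_eq Q (A ++ B) -> x \in A -> inR k x.
Proof. by move=> h hx; apply: hreg; rewrite mem_cat (perm_mem h) mem_cat hx orbT. Qed.
Lemma memQ_r (A B : seq pt) x : perm_eq Q (A ++ B) -> x \in B -> inR k x.
Proof. by move=> h hx; apply: hreg; rewrite mem_cat (perm_mem h) mem_cat hx !orbT. Qed.

Lemma absdiff (a b c : nat) : (a = 0 \/ b = 0)%N ->
  `|((a + c)%:R : R) - (b + c)%:R| = (a + b)%:R.
Proof.
case=> ->; rewrite !add0n ?addn0 natrD.
  have -> : (c%:R : R) - (b%:R + c%:R) = - b%:R by ring.
  by rewrite normrN normr_nat.
have -> : (a%:R + c%:R : R) - c%:R = a%:R by ring.
by rewrite normr_nat.
Qed.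

Lemma size_bound j RP RQ MP MQ : (j <= k.+1)%N ->
  perm_eq P (RP ++ MP) -> perm_eq Q (RQ ++ MQ) -> bal j MP MQ -> resid j RP RQ ->
  ((size RP + size RQ)%:R : R) <= Tj j.
Proof.
move=> jk hP hQ hb [hn hd].
have E : forall (a b : 'I_(ncells k j)), ~~ terminal k v j a b ->
   `| (count (in_cell k v j a b) P)%:R - (count (in_cell k v j a b) Q)%:R | =
   ((count (fun x => Kj k v j x == (nat_of_ord a, nat_of_ord b)) RP +
     count (fun x => Kj k v j x == (nat_of_ord a, nat_of_ord b)) RQ)%N%:R : R).
  move=> a b nt.
  set pr := fun x => Kj k v j x == (nat_of_ord a, nat_of_ord b).
  have cP : count (in_cell k v j a b) P = count pr P.
    apply: eq_in_count => x hx; rewrite K_cell //; apply: hreg; by rewrite mem_cat hx.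
  have cQ : count (in_cell k v j a b) Q = count pr Q.
    apply: eq_in_count => x hx; rewrite K_cell //; apply: hreg; by rewrite mem_cat hx orbT.
  have bb := hb (pred1 (nat_of_ord a, nat_of_ord b)).
  have bb' : count pr MP = count pr MQ.
    apply: bb => t /eqP ->; exact: nt.
  rewrite cP cQ (permP hP) (permP hQ) !count_cat bb'.
  have [z|z] : count pr RP = 0%N \/ count pr RQ = 0%N.
    case: (posnP (count pr RP)) => [-> | p1]; first by left.
    case: (posnP (count pr RQ)) => [-> | p2]; first by right.
    have : has pr RP by rewrite has_count.
    case/hasP => x hx /eqP ex.
    have : has pr RQ by rewrite has_count.
    case/hasP => y hy /eqP ey.
    by move: (hd x y hx hy); rewrite ex ey eqxx.
  - by rewrite z absdiff //; left.
  - by rewrite z absdiff //; right.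
rewrite /Tj (eq_bigr _ (fun a _ => eq_bigr _ (fun b nt => E a b nt))).
rewrite -(eq_bigr _ (fun a _ => natr_sum _ _ _ _)) -natr_sum ler_nat.
rewrite (eq_bigr _ (fun a _ => big_split _ _ _ _ _)) big_split /=.
rewrite !(sum_count_pairs (fun a b => ~~ terminal k v j a b) (g := Kj k v j)); try by move=> x; apply: K_lt.
rewrite -!size_filter.
have f1 : [seq x <- RP | ~~ terminal k v j (Kj k v j x).1 (Kj k v j x).2] = RP.
  by apply/all_filterP/allP => x hx; apply: hn; rewrite mem_cat hx.
have f2 : [seq x <- RQ | ~~ terminal k v j (Kj k v j x).1 (Kj k v j x).2] = RQ.
  by apply/all_filterP/allP => x hx; apply: hn; rewrite mem_cat hx orbT.
by rewrite f1 f2.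
Qed.

Definition Inv j RP RQ MP MQ c :=
  perm_eq P (RP ++ MP) /\ perm_eq Q (RQ ++ MQ) /\ Plan MP MQ c /\ bal j MP MQ /\
  resid j RP RQ /\ c <= 4 * \sum_(i < j) side R i * Tj i.

Lemma inP x : x \in P -> inR k x.
Proof. by move=> h; apply: hreg; rewrite mem_cat h. Qed.
Lemma inQ x : x \in Q -> inR k x.
Proof. by move=> h; apply: hreg; rewrite mem_cat h orbT. Qed.

Lemma level0 : exists RP RQ MP MQ c, Inv 0 RP RQ MP MQ c.
Proof.
have [RP [RQ [L [h1 h2 h3 h4]]]] := greedy (Kj k v 0) P Q.
have memL : forall pr, pr \in L -> pr.1 \in P /\ pr.2 \in Q.
  move=> pr hpr; split.
    by rewrite (perm_mem h1) mem_cat map_f ?orbT.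
  by rewrite (perm_mem h2) mem_cat map_f ?orbT.
exists RP, RQ, (map fst L), (map snd L), 0; split => //; split => //; split.
  have pl : Plan (map fst L) (map snd L) ((size L)%:R * 0).
    apply: plan_pairs => pr hpr. have [m1 m2] := memL pr hpr.
  have ek : Kj k v 0 pr.1 = Kj k v 0 pr.2 by move/allP: h3 => /(_ pr hpr) /eqP.
  have dl := K0_eq hv (inP m1) (inQ m2) ek.
  case: (eqVneq pr.1 pr.2) => [-> | ne]; first by rewrite dist_refl.
  have := hmin (p := pr.1) (q := pr.2); rewrite !mem_cat m1 m2 orbT => /(_ isT isT ne).
  lra.
  by rewrite mulr0 in pl.
split; first by move=> S _; apply: bal_pairs.
split; last by rewrite big_ord0 mulr0.
split => // x hx; apply/negP => ht.
have hPQ : x \in P ++ Q.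
  move: hx; rewrite mem_cat => /orP[hx|hx].
    by rewrite mem_cat (perm_mem h1) mem_cat hx.
  by rewrite mem_cat (perm_mem h2) mem_cat hx orbT.
have [t ht'] := K0_term hv (hreg hPQ) ht.
have := hdiag t hPQ; lra.
Qed.

Lemma level_step j RP RQ MP MQ c : (j <= k)%N -> Inv j RP RQ MP MQ c ->
  exists RP' RQ' MP' MQ' c', Inv j.+1 RP' RQ' MP' MQ' c'.
Proof.
move=> jk [hP [hQ [pl [hb [[hn hd] hc]]]]].
have jk1 : (j.+1 <= k.+1)%N by [].
have jk2 : (j <= k.+1)%N by apply: leqW.
pose K1 := Kj k v j.+1.
have [RP1 [RQ1 [L [g1 g2 g3 g4]]]] := greedy K1 RP RQ.
pose tm := fun x => term k v j.+1 (K1 x).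
pose TP := filter tm RP1; pose NP := filter (predC tm) RP1.
pose TQ := filter tm RQ1; pose NQ := filter (predC tm) RQ1.
pose D := 2 * side R j.+1.
have inRP : forall x, x \in RP -> inR k x by move=> x; exact: memP_l hP.
have inRQ : forall x, x \in RQ -> inR k x by move=> x; exact: memQ_l hQ.
have inRP1 : forall x, x \in RP1 -> inR k x.
  by move=> x hx; apply: inRP; rewrite (perm_mem g1) mem_cat hx.
have inRQ1 : forall x, x \in RQ1 -> inR k x.
  by move=> x hx; apply: inRQ; rewrite (perm_mem g2) mem_cat hx.
have pL : Plan (map fst L) (map snd L) ((size L)%:R * D).
  apply: plan_pairs => pr hpr.
  have m1 : pr.1 \in RP by rewrite (perm_mem g1) mem_cat map_f ?orbT.
  have m2 : pr.2 \in RQ by rewrite (perm_mem g2) mem_cat map_f ?orbT.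
  have ek : K1 pr.1 = K1 pr.2 by move/allP: g3 => /(_ pr hpr) /eqP.
  rewrite /D; have := K_dist hv jk1 (inRP _ m1) (inRQ _ m2) ek; exact.
have pT : Plan TP [::] ((size TP)%:R * D).
  apply: plan_diagL => x; rewrite mem_filter => /andP[t1 t2].
  rewrite /D; have := K_term hv jk1 (inRP1 _ t2) t1; exact.
have pT' : Plan [::] TQ ((size TQ)%:R * D).
  apply: plan_diagR => x; rewrite mem_filter => /andP[t1 t2].
  rewrite dist_sym /D; have := K_term hv jk1 (inRQ1 _ t2) t1; exact.
have pall := plan_cat pl (plan_cat pL (plan_cat pT pT')).
rewrite cats0 cat0s in pall.
have fP : perm_eq (TP ++ NP) RP1 by apply/permPl; exact: perm_filterC.
have fQ : perm_eq (TQ ++ NQ) RQ1 by apply/permPl; exact: perm_filterC.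
exists NP, NQ, (MP ++ (map fst L ++ TP)), (MQ ++ (map snd L ++ TQ)),
  (c + ((size L)%:R * D + ((size TP)%:R * D + (size TQ)%:R * D))).
split.
  apply/permP => a; move/permP: hP => /(_ a); move/permP: g1 => /(_ a).
  move/permP: fP => /(_ a); rewrite !count_cat; lia.
split.
  apply/permP => a; move/permP: hQ => /(_ a); move/permP: g2 => /(_ a).
  move/permP: fQ => /(_ a); rewrite !count_cat; lia.
split; first exact: pall.
split.
  move=> S hS; rewrite !count_cat.
  pose S' := fun t : nat * nat => S (t.1./2, t.2./2).
  have hS' : forall t, S' t -> ~~ term k v j t.
    move=> t St; apply/negP => ht; move: (hS _ St); by rewrite (term_par ht).
  have e1 : count (fun x => S (Kj k v j.+1 x)) MP = count (fun x => S' (Kj k v j x)) MP.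
    by apply: eq_in_count => x hx; rewrite (K_par hv jk (memP_r hP hx)).
  have e2 : count (fun x => S (Kj k v j.+1 x)) MQ = count (fun x => S' (Kj k v j x)) MQ.
    by apply: eq_in_count => x hx; rewrite (K_par hv jk (memQ_r hQ hx)).
  have e3 : forall s, count (fun x => S (Kj k v j.+1 x)) (filter tm s) = 0%N.
    move=> s; rewrite count_filter; rewrite (@eq_count _ _ pred0) ?count_pred0 // => x /=.
    by apply/negP => /andP[h1 h2]; move: (hS _ h1); rewrite /tm /K1 in h2; rewrite h2.
  rewrite e1 e2 (hb S' hS') (bal_pairs S g3) /TP /TQ !e3.
  by [].
split.
  split.
    move=> x; rewrite mem_cat !mem_filter => /orP[] /andP[] //.
  move=> x y; rewrite !mem_filter => /andP[_ hx] /andP[_ hy]; exact: g4.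
rewrite big_ord_recr /=.
have sb := size_bound jk2 hP hQ hb (conj hn hd).
have s0 := ltW (side_gt0 R j).
have sz : ((size L + size TP + size TQ)%:R : R) <= (size RP + size RQ)%:R.
  rewrite ler_nat (perm_size g1) (perm_size g2) !size_cat -(perm_size fP) -(perm_size fQ) !size_cat !size_map.
  move: (size L) (size TP) (size NP) (size TQ) (size NQ) => n1 n2 n3 n4 n5; lia.
have key : side R j * (size L + size TP + size TQ)%:R <= side R j * Tj j.
  by apply: ler_wpM2l => //; apply: le_trans sb.
rewrite !natrD in key.
rewrite /D sideS.
lra.
Qed.

Lemma levels j : (j <= k.+1)%N -> exists RP RQ MP MQ c, Inv j RP RQ MP MQ c.
Proof.
elim: j => [_|j IH hj]; first exact: level0.
have [RP [RQ [MP [MQ [c h]]]]] := IH (ltnW hj).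
exact: level_step h.
Qed.

Lemma main_bound : dW P Q <= 4 * dTper k v P Q.
Proof.
have [RP [RQ [MP [MQ [c [hP [hQ [pl [hb [hr hc]]]]]]]]]] := levels (leqnn k.+1).
have pR : Plan RP [::] ((size RP)%:R * side R k.+1).
  by apply: plan_diagL => x hx; apply: diag_top; exact: memP_l hP hx.
have pR' : Plan [::] RQ ((size RQ)%:R * side R k.+1).
  by apply: plan_diagR => x hx; rewrite dist_sym; apply: diag_top; exact: memQ_l hQ hx.
have pall := plan_cat (plan_cat pR pR') pl.
rewrite cats0 cat0s in pall.
have hP' : perm_eq (RP ++ MP) P by rewrite perm_sym.
have hQ' : perm_eq (RQ ++ MQ) Q by rewrite perm_sym.
have := plan_dW (PPerm hP' hQ' pall).
have sb := @size_bound k.+1 RP RQ MP MQ (leqnn _) hP hQ hb hr.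
rewrite dTperE big_ord_recr /=.
have s0 := ltW (side_gt0 R k.+1).
have T0 : 0 <= Tj k.+1 by apply: le_trans sb.
have key : side R k.+1 * (size RP + size RQ)%:R <= side R k.+1 * Tj k.+1.
  by apply: ler_wpM2l.
have p0 : 0 <= side R k.+1 * Tj k.+1 by apply: mulr_ge0.
rewrite natrD in key.
lra.
Qed.

End Main.

Theorem lemma8 (R : realType) :
  exists C : R, forall (k : nat) (P Q : seq (pt R)) (v : pt R),
    (forall p q, p \in P ++ Q -> q \in P ++ Q -> p != q -> 1 <= dist p q) ->
    (exists p q, [/\ p \in P ++ Q, q \in P ++ Q, p != q & dist p q = 1]) ->
    (forall p (t : R), p \in P ++ Q -> 1 <= dist p (t, t)) ->
    (exists p (t : R), p \in P ++ Q /\ dist p (t, t) = 1) ->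
    (forall p, p \in P ++ Q ->
       [/\ 0 <= p.1, p.1 <= Delta R k, 0 <= p.2 & p.2 <= Delta R k]) ->
    [/\ 0 <= v.1, v.1 <= Delta R k, 0 <= v.2 & v.2 <= Delta R k] ->
    dW P Q <= C * dTper k v P Q.
Proof.
exists 4 => k P Q v hmin _ hdiag _ hreg hv.
exact: (@main_bound R k v P Q hv hreg hmin hdiag).
Qed.
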